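(* Strongly $D$-continuous pseudo-orthomodular posets are precisely the complement-closed and doubly dense subsets of complete orthomodular lattices. That is: (a) every strongly $D$-continuous pseudo-orthomodular poset is isomorphic (as a poset with complementation) to a complement-closed and doubly dense subset of some complete orthomodular lattice, with the induced order and complementation; and (b) if $X$ is a complement-closed and doubly dense subset of a complete orthomodular lattice, then $X$ with the induced order and complementation is a strongly $D$-continuous pseudo-orthomodular poset.
   Context: For a poset and $M$ a subset, $U(M)$, $L(M)$ denote the sets of upper and lower bounds; $U(a,b)=U(\{a,b\})$ etc. For subsets $B,C$, $B\le C$ means $b\le c$ for all $b\in B$, $c\in C$. A poset with complementation is a bounded poset $(P,\le,{}',0,1)$ with antitone involution $'$ ($x\le y\Rightarrow y'\le x'$, $x''=x$) with $L(x,x')=\{0\}$, $U(x,x')=\{1\}$; it is pseudo-orthomodular if $L(U(L(x,y),y'),y)=L(x,y)$ for all $x,y$; it is strongly $D$-continuous if for all $B,C\subseteq P$ with $B\le C$: $\bigwedge_{\mathbf P}\{g\in P\mid g\in C\text{ or } g'\in B\}=0$ if and only if every lower bound of $C$ in $P$ is below every upper bound of $B$ in $P$. A lattice with complementation is orthomodular if $x\vee y=((x\vee y)\wedge y')\vee y$ for all $x,y$. For a poset with complementation $\mathbf Q=(Q,\le,{}',0,1)$, a subset $X\subseteq Q$ is complement-closed and doubly dense in $\mathbf Q$ if: for every $a\in Q$, $a=\bigvee_{\mathbf Q}(L(a)\cap X)=\bigwedge_{\mathbf Q}(U(a)\cap X)$; $x\in X$ implies $x'\in X$; and $0,1\in X$.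 *)

(* Defs.v *)
Set Implicit Arguments.

Record pc_struct (T : Type) := PC {
  le : T -> T -> Prop;
  cpl : T -> T;
  bot : T;
  top : T }.

Arguments PC {T}.

Section Defs.
Variable T : Type.
Variable S : pc_struct T.

Local Notation "x <= y" := (le S x y).
Local Notation "x '" := (cpl S x) (at level 2, format "x '").

Definition UB (M : T -> Prop) : T -> Prop := fun a => forall m, M m -> m <= a.
Definition LB (M : T -> Prop) : T -> Prop := fun a => forall m, M m -> a <= m.

Definition pair (x y : T) : T -> Prop := fun z => z = x \/ z = y.
Definition add1 (M : T -> Prop) (y : T) : T -> Prop := fun z => M z \/ z = y.

Definition set_eq (A B : T -> Prop) : Prop := forall z, A z <-> B z.

Definition is_sup (M : T -> Prop) (a : T) : Prop :=
  UB M a /\ forall b, UB M b -> a <= b.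
Definition is_inf (M : T -> Prop) (a : T) : Prop :=
  LB M a /\ forall b, LB M b -> b <= a.

Definition is_poset_compl : Prop :=
  (forall x, x <= x) /\
  (forall x y, x <= y -> y <= x -> x = y) /\
  (forall x y z, x <= y -> y <= z -> x <= z) /\
  (forall x, bot S <= x /\ x <= top S) /\
  (forall x y, x <= y -> y ' <= x ') /\
  (forall x, (x ') ' = x) /\
  (forall x, set_eq (LB (pair x (x '))) (fun z => z = bot S)) /\
  (forall x, set_eq (UB (pair x (x '))) (fun z => z = top S)).

Definition pseudo_orthomodular : Prop :=
  forall x y, set_eq (LB (add1 (UB (add1 (LB (pair x y)) (y '))) y))
                     (LB (pair x y)).

Definition set_le (B C : T -> Prop) : Prop :=
  forall b c, B b -> C c -> b <= c.

Definition strongly_D_continuous : Prop :=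
  forall B C : T -> Prop, set_le B C ->
    (is_inf (fun g => C g \/ B (g ')) (bot S) <->
     (forall l u, LB C l -> UB B u -> l <= u)).

Definition complete : Prop :=
  forall M : T -> Prop, (exists a, is_sup M a) /\ (exists a, is_inf M a).

(* x v y = ((x v y) ^ y') v y, written with sups/infs *)
Definition orthomodular : Prop :=
  forall x y j m k, is_sup (pair x y) j -> is_inf (pair j (y ')) m ->
    is_sup (pair m y) k -> j = k.

Definition complete_orthomodular_lattice : Prop :=
  is_poset_compl /\ complete /\ orthomodular.

Definition doubly_dense (X : T -> Prop) : Prop :=
  forall a, is_sup (fun z => z <= a /\ X z) a /\
            is_inf (fun z => a <= z /\ X z) a.

Definition compl_closed (X : T -> Prop) : Prop := forall x, X x -> X (x ').

End Defs.

Definition sub_struct (T : Type) (S : pc_struct T) (X : T -> Prop)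
  (hc : compl_closed S X) (h0 : X (bot S)) (h1 : X (top S)) : pc_struct {x | X x} :=
  PC (fun a b => le S (proj1_sig a) (proj1_sig b))
     (fun a => exist X (cpl S (proj1_sig a)) (hc _ (proj2_sig a)))
     (exist X (bot S) h0)
     (exist X (top S) h1).
Arguments sub_struct {T} S X hc h0 h1.

(* Main.v *)
Require Import Defs.
From Stdlib Require Import FunctionalExtensionality PropExtensionality ProofIrrelevance.

Lemma sig_eq' {A : Type} {P : A -> Prop} (a b : sig P) :
  proj1_sig a = proj1_sig b -> a = b.
Proof. destruct a, b; simpl; intros ->; f_equal; apply proof_irrelevance. Qed.

Lemma pred_ext {T : Type} (A B : T -> Prop) : (forall z, A z <-> B z) -> A = B.
Proof. intros H; apply functional_extensionality; intros z; apply propositional_extensionality; auto. Qed.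

Lemma rev_le {T} (S : pc_struct T) : is_poset_compl S ->
  forall x y, le S (cpl S y) (cpl S x) -> le S x y.
Proof.
  intros (Hrefl & Hanti & Htrans & Hbt & Hanto & Hinv & HLB & HUB) x y H.
  rewrite <- (Hinv x), <- (Hinv y). apply Hanto; exact H.
Qed.

Lemma b_poset L (SL : pc_struct L) X hc h0 h1 :
  is_poset_compl SL -> is_poset_compl (sub_struct SL X hc h0 h1).
Proof.
  intros (Hrefl & Hanti & Htrans & Hbt & Hanto & Hinv & HLB & HUB).
  unfold is_poset_compl, sub_struct; simpl.
  split; [|split; [|split; [|split; [|split; [|split; [|split]]]]]].
  - intros x; apply Hrefl.
  - intros x y H1 H2; apply sig_eq'; apply Hanti; auto.
  - intros x y z; apply Htrans.
  - intros x; apply Hbt.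
  - intros x y; apply Hanto.
  - intros x; apply sig_eq'; simpl; apply Hinv.
  - intros x z; unfold LB, pair; simpl; split.
    + intros H. apply sig_eq'; simpl. apply (HLB (proj1_sig x) (proj1_sig z)).
      intros m [Hm|Hm]; subst m.
      * apply (H x); left; reflexivity.
      * apply (H _ (or_intror eq_refl)).
    + intros Hz; subst z; intros m _; apply Hbt.
  - intros x z; unfold UB, pair; simpl; split.
    + intros H. apply sig_eq'; simpl. apply (HUB (proj1_sig x) (proj1_sig z)).
      intros m [Hm|Hm]; subst m.
      * apply (H x); left; reflexivity.
      * apply (H _ (or_intror eq_refl)).
    + intros Hz; subst z; intros m _; apply Hbt.
Qed.

Lemma b_sdc L (SL : pc_struct L) X hc h0 h1 :
  complete_orthomodular_lattice SL -> doubly_dense SL X ->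
  strongly_D_continuous (sub_struct SL X hc h0 h1).
Proof.
  intros [HP [Hc Hom]] Hd. pose proof HP as HP'.
  destruct HP' as (Hrefl & Hanti & Htrans & Hbt & Hanto & Hinv & HLB & HUB).
  intros B C Hle.
  set (Bv := fun v => exists p, B p /\ proj1_sig p = v).
  set (Cv := fun v => exists p, C p /\ proj1_sig p = v).
  destruct (Hc Bv) as [[b [Hb1 Hb2]] _].
  destruct (Hc Cv) as [_ [c [Hc1 Hc2]]].
  assert (Hbc : le SL b c).
  { apply Hb2. intros v [p [Hp <-]]. apply Hc2. intros w [q [Hq <-]].
    exact (Hle p q Hp Hq). }
  split.
  - intros [HG1 HG2] l u Hl Hu.
    assert (Hcb : le SL c b).
    { destruct (Hc (pair c (cpl SL b))) as [_ [d [Hd1 Hd2]]].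
      assert (Hd0 : le SL d (bot SL)).
      { destruct (Hd d) as [[Hs1 Hs2] _]. apply Hs2. intros z [Hz HXz].
        apply (HG2 (exist X z HXz)). intros g [Hg|Hg]; simpl.
        + apply (Htrans _ d); [exact Hz|]. apply (Htrans _ c).
          * apply Hd1; left; reflexivity.
          * apply Hc1. exists g; split; auto.
        + apply (Htrans _ d); [exact Hz|]. apply (Htrans _ (cpl SL b)).
          * apply Hd1; right; reflexivity.
          * apply rev_le; auto. rewrite Hinv. apply Hb1.
            eexists; split; [exact Hg|reflexivity]. }
      destruct (Hc (pair d b)) as [[k Hk] _].
      assert (Hck : c = k).
      { apply (Hom c b c d k); [| split; assumption | exact Hk].
        split.
        - intros m [Hm|Hm]; subst m; auto.
        - intros w Hw; apply Hw; left; reflexivity. }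
      rewrite Hck. destruct Hk as [_ Hk2]. apply Hk2.
      intros m [Hm|Hm]; subst m; [apply (Htrans _ (bot SL)); [exact Hd0|apply Hbt]|apply Hrefl]. }
    simpl. apply (Htrans _ c).
    + apply Hc2. intros v [p [Hp <-]]. exact (Hl p Hp).
    + apply (Htrans _ b); [exact Hcb|]. apply Hb2. intros v [p [Hp <-]]. exact (Hu p Hp).
  - intros H. split.
    + intros g _. simpl. apply Hbt.
    + intros z Hz. simpl.
      assert (Hcb : le SL c b).
      { destruct (Hd c) as [[_ Hs2] _]. apply Hs2. intros w [Hw HXw].
        destruct (Hd b) as [_ [_ Hi2]]. apply Hi2. intros v [Hv HXv].
        apply (H (exist X w HXw) (exist X v HXv)).
        - intros p Hp. simpl. apply (Htrans _ c); [exact Hw|]. apply Hc1. exists p; auto.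
        - intros p Hp. simpl. apply (Htrans _ b); [|exact Hv]. apply Hb1. exists p; auto. }
      assert (Hzc : le SL (proj1_sig z) c).
      { apply Hc2. intros v [p [Hp <-]]. exact (Hz p (or_introl Hp)). }
      assert (Hzb : le SL (proj1_sig z) (cpl SL b)).
      { apply rev_le; auto. rewrite Hinv. apply Hb2. intros v [p [Hp <-]].
        apply rev_le; auto. rewrite Hinv.
        refine (Hz (cpl (sub_struct SL X hc h0 h1) p) (or_intror _)).
        replace (cpl (sub_struct SL X hc h0 h1) (cpl (sub_struct SL X hc h0 h1) p)) with p;
          [exact Hp|]. apply sig_eq'; simpl; symmetry; apply Hinv. }
      assert (Hz0 : proj1_sig z = bot SL).
      { apply (HLB b). intros m [Hm|Hm]; subst m; auto. apply (Htrans _ c); auto. }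
      change (le SL (proj1_sig z) (bot SL)); rewrite Hz0; apply Hrefl.
Qed.

Lemma b_pom L (SL : pc_struct L) X hc h0 h1 :
  complete_orthomodular_lattice SL -> doubly_dense SL X ->
  pseudo_orthomodular (sub_struct SL X hc h0 h1).
Proof.
  intros [HP [Hc Hom]] Hd. pose proof HP as HP'.
  destruct HP' as (Hrefl & Hanti & Htrans & Hbt & Hanto & Hinv & HLB & HUB).
  intros x y z. split.
  - intros Hz.
    destruct (Hc (pair (proj1_sig x) (proj1_sig y))) as [_ [a [Ha1 Ha2]]].
    set (Y := proj1_sig y) in *.
    destruct (Hc (pair a (cpl SL Y))) as [[s [Hs1 Hs2]] _].
    assert (Hzy : le SL (proj1_sig z) Y) by exact (Hz y (or_intror eq_refl)).
    assert (Hzs : le SL (proj1_sig z) s).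
    { destruct (Hd s) as [_ [_ Hi2]]. apply Hi2. intros u [Hu HXu].
      apply (Hz (exist X u HXu)). left. intros m [Hm|Hm]; simpl.
      - apply (Htrans _ a); [|apply (Htrans _ s); [apply Hs1; left; reflexivity|exact Hu]].
        apply Ha2. intros v [Hv|Hv]; subst v.
        + exact (Hm x (or_introl eq_refl)).
        + exact (Hm y (or_intror eq_refl)).
      - subst m. simpl. apply (Htrans _ s); [apply Hs1; right; reflexivity|exact Hu]. }
    assert (Hay : le SL a Y) by (apply Ha1; right; reflexivity).
    destruct (Hc (pair (cpl SL s) (cpl SL Y))) as [[k [Hk1 Hk2]] _].
    assert (Hak : cpl SL a = k).
    { apply (Hom (cpl SL a) (cpl SL Y) (cpl SL a) (cpl SL s) k).
      - split.
        + intros m [Hm|Hm]; subst m; [apply Hrefl|apply Hanto; exact Hay].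
        + intros b0 Hb0. apply Hb0; left; reflexivity.
      - rewrite Hinv. split.
        + intros m [Hm|Hm]; subst m.
          * apply Hanto. apply Hs1; left; reflexivity.
          * apply rev_le; auto. rewrite Hinv. apply Hs1; right; reflexivity.
        + intros w Hw. apply rev_le; auto. rewrite Hinv. apply Hs2.
          intros m [Hm|Hm]; subst m.
          * apply rev_le; auto. rewrite Hinv. apply Hw; left; reflexivity.
          * apply Hanto. apply Hw; right; reflexivity.
      - split; assumption. }
    assert (Hza : le SL (proj1_sig z) a).
    { apply rev_le; auto. rewrite Hak. apply Hk2.
      intros m [Hm|Hm]; subst m; apply Hanto; assumption. }
    intros m [Hm|Hm]; subst m; simpl; apply (Htrans _ a); auto.
    + apply Ha1; left; reflexivity.
  - intros Hz m [Hm|Hm].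
    + apply Hm. left. exact Hz.
    + subst m. apply Hz. right. reflexivity.
Qed.

(* ---------- part (a): MacNeille completion ---------- *)
Definition normal {T} (S : pc_struct T) (A : T -> Prop) : Prop :=
  forall z, LB S (UB S A) z -> A z.
Definition NI {T} (S : pc_struct T) := {A : T -> Prop | normal S A}.

Lemma prin_normal {T} (S : pc_struct T) x : normal S (fun z => le S z x).
Proof. intros z Hz. apply Hz. intros m Hm; exact Hm. Qed.

Definition prin {T} (S : pc_struct T) x : NI S := exist _ _ (prin_normal S x).

Definition cplset {T} (S : pc_struct T) (A : T -> Prop) : T -> Prop :=
  fun x => forall a, A a -> le S x (cpl S a).

Lemma cplset_normal {T} (S : pc_struct T) A : normal S (cplset S A).
Proof. intros z Hz a Ha. apply Hz. intros w Hw. apply Hw; exact Ha. Qed.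

Definition NIS {T} (S : pc_struct T) : pc_struct (NI S) :=
  PC (fun A B : NI S => forall z, proj1_sig A z -> proj1_sig B z)
     (fun A => exist _ (cplset S (proj1_sig A)) (cplset_normal S _))
     (prin S (bot S)) (prin S (top S)).

Lemma normal_down {T} (S : pc_struct T) : is_poset_compl S ->
  forall A, normal S A -> forall x z, A x -> le S z x -> A z.
Proof.
  intros (Hrefl & Hanti & Htrans & Hbt & Hanto & Hinv & HLB & HUB) A HA x z Hx Hz.
  apply HA. intros u Hu. apply (Htrans _ x); auto.
Qed.

Lemma NI_eq {T} (S : pc_struct T) (A B : NI S) :
  (forall z, proj1_sig A z <-> proj1_sig B z) -> A = B.
Proof. intros H; apply sig_eq'; apply pred_ext; exact H. Qed.

Lemma cpl_prin {T} (S : pc_struct T) : is_poset_compl S ->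
  forall x, cpl (NIS S) (prin S x) = prin S (cpl S x).
Proof.
  intros HP. pose proof HP as HP'.
  destruct HP' as (Hrefl & Hanti & Htrans & Hbt & Hanto & Hinv & HLB & HUB).
  intros x. apply NI_eq; simpl; intros z; unfold cplset; split.
  - intros H; apply H; apply Hrefl.
  - intros H a Ha. apply (Htrans _ (cpl S x)); auto.
Qed.

Lemma NI_bot {T} (S : pc_struct T) : is_poset_compl S ->
  forall A : NI S, le (NIS S) (bot (NIS S)) A.
Proof.
  intros (Hrefl & Hanti & Htrans & Hbt & Hanto & Hinv & HLB & HUB) [A HA] z Hz; simpl in *.
  apply HA. intros u _. apply (Htrans _ (bot S)); [exact Hz|apply Hbt].
Qed.

Lemma NI_poset {T} (S : pc_struct T) : is_poset_compl S -> is_poset_compl (NIS S).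
Proof.
  intros HP. pose proof (NI_bot S HP) as Hbot. pose proof HP as HP'.
  destruct HP' as (Hrefl & Hanti & Htrans & Hbt & Hanto & Hinv & HLB & HUB).
  split; [|split; [|split; [|split; [|split; [|split; [|split]]]]]].
  - intros A z; auto.
  - intros A B H1 H2; apply NI_eq; split; auto.
  - intros A B C H1 H2 z Hz; auto.
  - intros A; split; [apply Hbot|]. intros z _; simpl. apply Hbt.
  - intros A B H z Hz a Ha. apply Hz; auto.
  - intros [A HA]. apply NI_eq; simpl; unfold cplset; intros z; split.
    + intros H. apply HA. intros u Hu. rewrite <- (Hinv u). apply H.
      intros a Ha. apply Hanto. apply Hu; exact Ha.
    + intros Hz w Hw. apply rev_le; auto. rewrite Hinv. apply Hw; exact Hz.
  - intros [A HA] [D HD]; unfold LB, pair; split.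
    + intros H. assert (H1 := H _ (or_introl eq_refl)). assert (H2 := H _ (or_intror eq_refl)).
      simpl in H1, H2. apply NI_eq; simpl. intros z; split.
      * intros Hz. assert (E : z = bot S).
        { apply (HLB z). intros m [Hm|Hm]; subst m; [apply Hrefl|]. apply (H2 z Hz z (H1 z Hz)). }
        subst z; apply Hrefl.
      * intros Hz. apply (Hbot (exist _ D HD)). exact Hz.
    + intros E; rewrite E. intros m _; apply Hbot.
  - intros [A HA] [D HD]; unfold UB, pair; split.
    + intros H. assert (H1 := H _ (or_introl eq_refl)). assert (H2 := H _ (or_intror eq_refl)).
      simpl in H1, H2. apply NI_eq; simpl. intros z; split.
      * intros _. apply Hbt.
      * intros Hz. apply HD. intros u Hu.
        assert (Hc : cplset S A (cpl S u)).
        { intros a Ha. apply Hanto. apply Hu. apply H1; exact Ha. }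
        assert (E : u = top S).
        { apply (HUB u). intros m [Hm|Hm]; subst m; [apply Hrefl|]. apply Hu. apply H2. exact Hc. }
        subst u; exact Hz.
    + intros E; rewrite E. intros m _ z Hz; simpl. apply Hbt.
Qed.

Lemma NI_complete {T} (S : pc_struct T) : complete (NIS S).
Proof.
  intros M. split.
  - set (U0 := fun w => exists A : NI S, M A /\ proj1_sig A w).
    assert (Hn : normal S (LB S (UB S U0))).
    { intros z Hz u Hu. apply Hz. intros w Hw. apply Hw. exact Hu. }
    exists (exist _ _ Hn). split.
    + intros A HA z Hz u Hu; simpl. apply Hu. exists A; auto.
    + intros [B HB] HUb z Hz; simpl in *. apply HB. intros u Hu. apply Hz.
      intros w [A [HA Hw]]. apply Hu. exact (HUb A HA w Hw).
  - set (I0 := fun z => forall A : NI S, M A -> proj1_sig A z).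
    assert (Hn : normal S I0).
    { intros z Hz [A HA] HMA; simpl. apply HA. intros u Hu. apply Hz.
      intros w Hw. apply Hu. exact (Hw _ HMA). }
    exists (exist _ _ Hn). split.
    + intros A HA z Hz; simpl in Hz. exact (Hz A HA).
    + intros B HB z Hz; simpl. intros A HA. exact (HB A HA z Hz).
Qed.

Lemma NI_om {T} (S : pc_struct T) : is_poset_compl S -> strongly_D_continuous S ->
  orthomodular (NIS S).
Proof.
  intros HP Hsd. pose proof HP as HP'.
  destruct HP' as (Hrefl & Hanti & Htrans & Hbt & Hanto & Hinv & HLB & HUB).
  intros x y j m k [Hj1 Hj2] [Hm1 Hm2] [Hk1 Hk2].
  assert (Hyk : le (NIS S) y k) by (apply Hk1; right; reflexivity).
  assert (Hmk : le (NIS S) m k) by (apply Hk1; left; reflexivity).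
  assert (Hkj : le (NIS S) k j).
  { apply Hk2. intros w [Hw|Hw]; subst w.
    - apply Hm1; left; reflexivity.
    - apply Hj1; right; reflexivity. }
  destruct j as [J HJ]; destruct k as [K HK].
  apply NI_eq; simpl; intros z; split; [|apply Hkj].
  intros Hz. apply HK. intros u Hu.
  assert (Hle : set_le S K (UB S J)).
  { intros b c Hb Hc. apply Hc. apply Hkj. exact Hb. }
  refine (proj1 (Hsd K (UB S J) Hle) _ z u _ Hu).
  - split.
    + intros g _. apply Hbt.
    + intros w Hw.
      assert (HwJ : J w) by (apply HJ; intros v Hv; apply Hw; left; exact Hv).
      assert (HwK : cplset S K w).
      { intros a Ha. rewrite <- (Hinv a) in Ha. exact (Hw _ (or_intror Ha)). }
      assert (Hwm : proj1_sig m w).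
      { refine (Hm2 (prin S w) _ w (Hrefl w)).
        intros n [Hn|Hn]; subst n; intros v Hv; simpl in *.
        - exact (normal_down S HP J HJ w v HwJ Hv).
        - intros a Ha. apply (Htrans _ w); [exact Hv|]. apply HwK. apply Hyk; exact Ha. }
      assert (E : w = bot S).
      { apply (HLB w). intros n [Hn|Hn]; subst n; [apply Hrefl|].
        apply HwK. apply Hmk. exact Hwm. }
      subst w; apply Hrefl.
  - intros v Hv. apply Hv. exact Hz.
Qed.

Definition Xp {T} (S : pc_struct T) : NI S -> Prop := fun A => exists x, A = prin S x.

Lemma NI_dd {T} (S : pc_struct T) : is_poset_compl S -> doubly_dense (NIS S) (Xp S).
Proof.
  intros HP. pose proof HP as HP'.
  destruct HP' as (Hrefl & Hanti & Htrans & Hbt & Hanto & Hinv & HLB & HUB).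
  intros [A HA]. split; split.
  - intros Z [HZ _]; exact HZ.
  - intros B HB z Hz. refine (HB (prin S z) _ z (Hrefl z)). split.
    + intros v Hv; simpl in *. exact (normal_down S HP A HA z v Hz Hv).
    + exists z; reflexivity.
  - intros Z [HZ _]; exact HZ.
  - intros B HB z Hz; simpl. apply HA. intros u Hu.
    refine (HB (prin S u) _ z Hz). split.
    + intros v Hv; simpl in *. apply Hu; exact Hv.
    + exists u; reflexivity.
Qed.

Theorem theorem10 :
  (* (a) *)
  (forall (T : Type) (S : pc_struct T),
     is_poset_compl S -> strongly_D_continuous S -> pseudo_orthomodular S ->
     exists (L : Type) (SL : pc_struct L) (X : L -> Prop)
            (hc : compl_closed SL X) (h0 : X (bot SL)) (h1 : X (top SL)),
       complete_orthomodular_lattice SL /\ doubly_dense SL X /\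
       exists f : T -> {x | X x},
         (forall y, exists x, f x = y) /\
         (forall x1 x2, f x1 = f x2 -> x1 = x2) /\
         (forall x y, le S x y <-> le (sub_struct SL X hc h0 h1) (f x) (f y)) /\
         (forall x, f (cpl S x) = cpl (sub_struct SL X hc h0 h1) (f x)))
  /\
  (* (b) *)
  (forall (L : Type) (SL : pc_struct L) (X : L -> Prop)
          (hc : compl_closed SL X) (h0 : X (bot SL)) (h1 : X (top SL)),
     complete_orthomodular_lattice SL -> doubly_dense SL X ->
     is_poset_compl (sub_struct SL X hc h0 h1) /\
     strongly_D_continuous (sub_struct SL X hc h0 h1) /\
     pseudo_orthomodular (sub_struct SL X hc h0 h1)).
Proof.
  split.
  - intros T S HP Hsd _.
    pose proof HP as HP'.
    destruct HP' as (Hrefl & Hanti & Htrans & Hbt & Hanto & Hinv & HLB & HUB).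
    assert (hc : compl_closed (NIS S) (Xp S)).
    { intros A [x Hx]. exists (cpl S x). rewrite Hx. apply cpl_prin; exact HP. }
    assert (h0 : Xp S (bot (NIS S))) by (exists (bot S); reflexivity).
    assert (h1 : Xp S (top (NIS S))) by (exists (top S); reflexivity).
    exists (NI S), (NIS S), (Xp S), hc, h0, h1.
    split; [split; [apply NI_poset; exact HP|split; [apply NI_complete|apply NI_om; assumption]]|].
    split; [apply NI_dd; exact HP|].
    exists (fun x => exist (Xp S) (prin S x) (ex_intro _ x eq_refl)).
    split; [|split; [|split]].
    + intros [A [x Hx]]. exists x. apply sig_eq'; simpl. symmetry; exact Hx.
    + intros x1 x2 H.
      apply (f_equal (fun s => proj1_sig (proj1_sig s))) in H. simpl in H.
      apply Hanti.
      * pose proof (equal_f H x1) as E. simpl in E. rewrite <- E. apply Hrefl.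
      * pose proof (equal_f H x2) as E. simpl in E. rewrite E. apply Hrefl.
    + intros x y; simpl; split.
      * intros H z Hz. apply (Htrans _ x); assumption.
      * intros H. apply H. apply Hrefl.
    + intros x. apply sig_eq'; simpl. symmetry. apply cpl_prin; exact HP.
  - intros L SL X hc h0 h1 HL Hd. split; [|split].
    + apply b_poset. exact (proj1 HL).
    + apply b_sdc; assumption.
    + apply b_pom; assumption.
Qed.
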